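(* Let $\mathcal{K}$ be a continuous unitary representation of $\overline{\mathfrak{S}}_\infty$ in a Hilbert space $\mathcal{H}$, let $n\ge 0$ be an integer, and let $P_n$ be the weak-operator limit of $\mathcal{K}({}^n\sigma_m)$ as $m\to\infty$. Then $\mathcal{K}(s)P_n=P_n$ for every $s\in\mathfrak{S}(n,\infty)$.
   Context: $\overline{\mathfrak{S}}_\infty$ is the group of all bijections of $\mathbb{N}$, with the Polish topology in which the subgroups $\mathfrak{S}(n,\infty)=\{s: s(k)=k \text{ for } k=1,\dots,n\}$ form a fundamental system of neighborhoods of the identity; continuity of $\mathcal{K}$ means $\lim_{k\to\infty}\sup_{s\in\mathfrak{S}(k,\infty)}\|\mathcal{K}(s)\eta-\eta\|=0$ for each $\eta\in\mathcal{H}$. $(k\;j)$ denotes the transposition of $k$ and $j$, and ${}^n\sigma_m=(n+1\;\;n+m+1)(n+2\;\;n+m+2)\cdots(n+m\;\;n+2m)$. The weak-operator limit $P_n=\lim_{m\to\infty}\mathcal{K}({}^n\sigma_m)$ exists. *)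

(* Defs.v *)
From mathcomp Require Import all_boot all_order all_algebra.
From mathcomp Require Import reals complex.
Set Implicit Arguments. Unset Strict Implicit. Unset Printing Implicit Defensive.
Import Order.TTheory GRing.Theory Num.Theory.
Local Open Scope ring_scope.
Local Open Scope complex_scope.

Section Hilbert.
Variable R : realType.
Variable H : lmodType R[i].
Variable ip : H -> H -> R[i].

Definition hnorm (x : H) : R[i] := sqrtC (ip x x).

Definition is_inner_product : Prop :=
  [/\ (forall (a : R[i]) (x y z : H), ip (a *: x + y) z = a * ip x z + ip y z),
      (forall x y : H, ip y x = (ip x y)^*),
      (forall x : H, 0 <= ip x x) &
      (forall x : H, ip x x = 0 -> x = 0)].

Definition hcomplete : Prop :=
  forall u : nat -> H,
    (forall e : R[i], 0 < e -> exists N, forall m k,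
        (N <= m)%N -> (N <= k)%N -> hnorm (u m - u k) < e) ->
    exists x : H, forall e : R[i], 0 < e -> exists N, forall m,
        (N <= m)%N -> hnorm (u m - x) < e.

Definition is_hilbert : Prop := is_inner_product /\ hcomplete.

Definition unitary (U : H -> H) : Prop :=
  [/\ linear U,
      (forall y : H, exists x : H, U x = y) &
      (forall x y : H, ip (U x) (U y) = ip x y)].

End Hilbert.

(* Convention: the paper's N = {1,2,...} is relabelled as             *)
(* nat = {0,1,...} via k |-> k-1.                                    *)

Record bij := Bij {
  bfun :> nat -> nat;
  binv : nat -> nat;
  bfunK : cancel bfun binv;
  binvK : cancel binv bfun }.

Definition bid : bij := @Bij id id (fun _ => erefl) (fun _ => erefl).

Lemma bcomp_K (s t : bij) : cancel (s \o t) (binv t \o binv s).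
Proof. by move=> x /=; rewrite bfunK bfunK. Qed.
Lemma bcomp_Kinv (s t : bij) : cancel (binv t \o binv s) (s \o t).
Proof. by move=> x /=; rewrite binvK binvK. Qed.
Definition bmul (s t : bij) : bij :=
  @Bij (s \o t) (binv t \o binv s) (bcomp_K s t) (bcomp_Kinv s t).

Definition tr_fun (k j x : nat) : nat :=
  if x == k then j else if x == j then k else x.
Lemma tr_funK k j : cancel (tr_fun k j) (tr_fun k j).
Proof.
move=> x; rewrite /tr_fun.
case: (eqVneq x k) => [->|xk]; first by rewrite eqxx; case: eqVneq => // ->.
case: (eqVneq x j) => [->|xj]; first by rewrite eqxx.
by rewrite (negPf xk) (negPf xj).
Qed.
Definition btr (k j : nat) : bij := @Bij (tr_fun k j) (tr_fun k j) (tr_funK k j) (tr_funK k j).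

(* S(n, oo): bijections fixing the first n points
   (paper: 1..n ; here 0..n-1) *)
Definition in_S (n : nat) (s : bij) : Prop := forall k, (k < n)%N -> s k = k.

(* ^n sigma_m = (n+1 n+m+1)(n+2 n+m+2)...(n+m n+2m)
   (paper indexing); here: product over i < m of (n+i  n+m+i). *)
Definition sigma (n m : nat) : bij :=
  foldr bmul bid [seq btr (n + i) (n + m + i) | i <- iota 0 m].

Section Rep.
Variable R : realType.
Variable H : lmodType R[i].
Variable ip : H -> H -> R[i].

Definition unitary_rep (K : bij -> H -> H) : Prop :=
  [/\ (forall s, unitary ip (K s)),
      (forall s t (x : H), K (bmul s t) x = K s (K t x)) &
      (forall x : H, K bid x = x)].

Definition rep_continuous (K : bij -> H -> H) : Prop :=
  forall (eta : H) (e : R[i]), 0 < e ->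
    exists k0, forall k, (k0 <= k)%N ->
      forall s, in_S k s -> hnorm ip (K s eta - eta) <= e.

Definition weak_op_limit (T : nat -> H -> H) (P : H -> H) : Prop :=
  forall (xi eta : H) (e : R[i]), 0 < e ->
    exists N, forall m, (N <= m)%N -> `| ip (T m xi) eta - ip (P xi) eta | < e.

End Rep.

(* Main.v *)
Require Import Defs.
From mathcomp Require Import all_boot all_order all_algebra.
From mathcomp Require Import reals complex.
From mathcomp Require Import ring zify.
From Stdlib Require Import FunctionalExtensionality ProofIrrelevance.
Import Order.TTheory GRing.Theory Num.Theory.
Local Open Scope ring_scope.
Local Open Scope complex_scope.
Set Implicit Arguments.

Definition sf n m x := if (n <= x < n + m)%N then (x + m)%N
  else if (n + m <= x < n + m + m)%N then (x - m)%N else x.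

Lemma sigmaE_gen n m l j x : (j + l <= m)%N ->
  foldr bmul bid [seq btr (n + i) (n + m + i) | i <- iota j l] x =
  if (n + j <= x < n + j + l)%N then (x + m)%N
  else if (n + m + j <= x < n + m + j + l)%N then (x - m)%N else x.
Proof.
elim: l j x => [|l IH] j x hjl /=.
  by rewrite !addn0; case: ifP => h; [lia|]; case: ifP => h2 //; lia.
rewrite IH; last lia.
rewrite /tr_fun.
repeat case: ifP; lia.
Qed.

Lemma sigmaE n m x : sigma n m x = sf n m x.
Proof. by rewrite /sigma sigmaE_gen // /sf !addn0. Qed.

Lemma sfK n m x : sf n m (sf n m x) = x.
Proof. rewrite /sf; repeat case: ifP; lia. Qed.

Lemma bij_eq (s t : bij) : (forall x, s x = t x) -> s = t.
Proof.
case: s => f g fK gK; case: t => f' g' fK' gK' /= e.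
have ef : f = f' by apply: functional_extensionality.
subst f'.
have eg : g = g'.
  apply: functional_extensionality => y.
  by rewrite -{1}(gK' y) fK.
subst g'.
by rewrite (proof_irrelevance _ fK fK') (proof_irrelevance _ gK gK').
Qed.

Lemma bij_inj {s : bij} : injective s.
Proof. exact: can_inj (@bfunK s). Qed.

Lemma ipB (R : realType) (H : lmodType R[i]) (ip : H -> H -> R[i]) :
  is_inner_product ip -> forall x y z, ip (x - y) z = ip x z - ip y z.
Proof.
case=> hl _ _ _ x y z.
by rewrite -[x - y]addrC -scaleN1r hl mulN1r addrC.
Qed.

Lemma ip0l (R : realType) (H : lmodType R[i]) (ip : H -> H -> R[i]) :
  is_inner_product ip -> forall z, ip 0 z = 0.
Proof. by move=> hi z; rewrite -(subrr (0:H)) ipB // subrr. Qed.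

Lemma ip0r (R : realType) (H : lmodType R[i]) (ip : H -> H -> R[i]) :
  is_inner_product ip -> forall z, ip z 0 = 0.
Proof. by move=> hi z; case: (hi) => _ hs _ _; rewrite hs ip0l // conjc0. Qed.

Lemma ipZ (R : realType) (H : lmodType R[i]) (ip : H -> H -> R[i]) :
  is_inner_product ip -> forall a x z, ip (a *: x) z = a * ip x z.
Proof.
move=> hi a x z; case: (hi) => hl _ _ _.
by rewrite -[a *: x]addr0 hl ip0l // addr0.
Qed.

Lemma ipZr (R : realType) (H : lmodType R[i]) (ip : H -> H -> R[i]) :
  is_inner_product ip -> forall a x z, ip z (a *: x) = conjc a * ip z x.
Proof.
move=> hi a x z; case: (hi) => _ hs _ _.
by rewrite (hs (a *: x)) ipZ // rmorphM /= -hs.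
Qed.

Lemma ipBr (R : realType) (H : lmodType R[i]) (ip : H -> H -> R[i]) :
  is_inner_product ip -> forall x y z, ip z (x - y) = ip z x - ip z y.
Proof.
move=> hi x y z; case: (hi) => _ hs _ _.
by rewrite (hs (x - y) z) ipB // rmorphB /= -!hs.
Qed.

Lemma ip_real (R : realType) (H : lmodType R[i]) (ip : H -> H -> R[i]) :
  is_inner_product ip -> forall y, conjc (ip y y) = ip y y.
Proof. by case=> _ hs _ _ y; rewrite -hs. Qed.

Lemma CS (R : realType) (H : lmodType R[i]) (ip : H -> H -> R[i]) :
  is_inner_product ip -> forall a y, `|ip a y| ^+ 2 <= ip a a * ip y y.
Proof.
move=> hi a y; case: (hi) => hl hs hp hd.
have [b0|bn0] := eqVneq (ip y y) 0.
  by rewrite (hd _ b0) ip0r // normr0 expr0n /= ip0l // mulr0.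
set c := ip a y; set b := ip y y.
have bpos : 0 < b by rewrite lt0r bn0 hp.
have E : ip (b *: a - c *: y) (b *: a - c *: y) = b * (b * ip a a - conjc c * c).
  rewrite !(ipB hi) !(ipBr hi) !(ipZ hi) !(ipZr hi).
  have hb : conjc b = b := ip_real hi y.
  have hc : ip y a = conjc c := hs a y.
  rewrite hb hc -/c -/b; ring.
have := hp (b *: a - c *: y); rewrite E pmulr_rge0 // subr_ge0 => h.
by rewrite sqr_normc [c * _]mulrC [ip a a * _]mulrC.
Qed.

Lemma small0 (R : realType) (d : R[i]) :
  (forall del : R[i], 0 < del -> `|d| < del *+ 3) -> d = 0.
Proof.
move=> h; apply/eqP; apply/negPn/negP => dn0.
have := h ((`|d| / 3%:R)%R).
rewrite divr_gt0 ?normr_gt0 ?ltr0n // => /(_ isT).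
have -> : (`|d| / 3%:R) *+ 3 = `|d|.
  by field.
by rewrite ltxx.
Qed.

Lemma sq_bound (R : realType) (w Z B del : R[i]) : 0 <= Z -> 0 <= B -> 0 < del ->
  sqrtC Z <= del / (1 + B) -> `|w| ^+ 2 <= Z * B -> `|w| <= del.
Proof.
move=> Z0 B0 d0 hs hw.
have B1 : 0 < 1 + B by apply: (lt_le_trans ltr01); rewrite lerDl.
set e := del / (1 + B) in hs.
have e0 : 0 <= e by rewrite divr_ge0 // ltW.
have hZ : Z <= e ^+ 2.
  rewrite -(sqrtCK Z); apply: lerXn2r => //; by rewrite nnegrE sqrtC_ge0.
have hB : B <= (1 + B) ^+ 2.
  apply: (le_trans (y := 1 + B)); first by rewrite lerDr.
  by apply: ler_eXnr => //; rewrite lerDl.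
have he : e * (1 + B) = del by rewrite /e divfK // gt_eqF.
have := @ler_pXn2r _ 2 isT `|w| del; move=> h; rewrite -h ?nnegrE ?normr_ge0 ?(ltW d0) //.
apply: (le_trans hw).
apply: (le_trans (y := e ^+ 2 * B)); first exact: ler_wpM2r.
have -> : del ^+ 2 = e ^+ 2 * (1 + B) ^+ 2 by rewrite -exprMn he.
exact: (ler_wpM2l (exprn_ge0 2 e0) hB).
Qed.

Lemma KB (R : realType) (H : lmodType R[i]) (ip : H -> H -> R[i]) (K : bij -> H -> H) :
  unitary_rep ip K -> forall s u v, K s (u - v) = K s u - K s v.
Proof.
case=> hU _ _ s u v; case: (hU s) => hlin _ _.
by rewrite -[u - v]addrC -scaleN1r hlin scaleN1r addrC.
Qed.

Lemma transpo_fix (R : realType) (H : lmodType R[i]) (ip : H -> H -> R[i])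
    (K : bij -> H -> H) (n : nat) (P : H -> H) :
  is_inner_product ip ->
  unitary_rep ip K ->
  rep_continuous ip K ->
  weak_op_limit ip (fun m => K (sigma n m)) P ->
  forall a b x, (n <= a)%N -> (n <= b)%N -> K (btr a b) (P x) = P x.
Proof.
move=> hi hK hc hw a b x ha hb.
case: (hi) => _ hs hp hd.
case: (hK) => hU hM hI.
apply/eqP; rewrite -subr_eq0; apply/eqP; apply: hd.
set tau := btr a b.
set v := K tau (P x) - P x.
suff hv : forall y, ip v y = 0 by exact: hv.
move=> y.
case: (hU tau) => _ hsurj hpres.
have [c hcy] := hsurj y.
rewrite /v (ipB hi) -hcy hpres.
apply: small0 => del del0.
set B := ip y y.
have B0 : 0 <= B := hp y.
have B1 : 0 < 1 + B by apply: (lt_le_trans ltr01); rewrite lerDl.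
have [N1 hN1] := hw x c del del0.
have [N2 hN2] := hw x y del del0.
have e0 : 0 < del / (1 + B) by rewrite divr_gt0.
have [k0 hk0] := hc x _ e0.
pose m := (N1 + N2 + k0 + a + b + 1)%N.
pose sg := sigma n m.
pose u := bmul sg (bmul tau sg).
have hu : in_S (n + m) u.
  move=> k hk /=; rewrite !sigmaE /sf /tr_fun /m in hk *.
  repeat case: ifP; lia.
have hcomm : forall z, K tau (K sg z) = K sg (K u z).
  move=> z; rewrite -!hM; congr (K _ z); apply: bij_eq => k /=.
  by rewrite !sigmaE sfK.
have hz := hk0 (n + m)%N ltac:(rewrite /m; lia) u hu.
have e1 : ip (K sg x) c = ip (K sg (K u x)) (K tau c).
  by rewrite -hcomm hpres.
rewrite hcy in e1.
have E : ip (P x) c - ip (P x) y =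
   - (ip (K sg x) c - ip (P x) c) + (ip (K sg (K u x)) y - ip (K sg x) y)
   + (ip (K sg x) y - ip (P x) y).
  rewrite e1; ring.
rewrite hcy E.
have h1 : `|- (ip (K sg x) c - ip (P x) c)| < del.
  by rewrite normrN; apply: hN1; rewrite /m; lia.
have h3 : `|ip (K sg x) y - ip (P x) y| < del.
  by apply: hN2; rewrite /m; lia.
have h2 : `|ip (K sg (K u x)) y - ip (K sg x) y| <= del.
  rewrite -(ipB hi) -(KB hK).
  apply: (@sq_bound _ _ (ip (K u x - x) (K u x - x)) B) => //.
  have := CS hi (K sg (K u x - x)) y.
  by case: (hU sg) => _ _ ->.
have -> : del *+ 3 = del + del + del by rewrite !mulrS mulr0n addr0 addrA.
apply: (le_lt_trans (ler_normD _ _)).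
apply: ltr_leD; last exact: ltW.
exact: (le_lt_trans (ler_normD _ _) (ltr_leD h1 h2)).
Qed.

Lemma small_sqrt (R : realType) (Z : R[i]) : 0 <= Z ->
  (forall e : R[i], 0 < e -> sqrtC Z <= e) -> Z = 0.
Proof.
move=> Z0 h.
suff s0 : sqrtC Z = 0 by rewrite -(sqrtCK Z) s0 expr0n.
apply/eqP; apply/negPn/negP => sn0.
have sp : 0 < sqrtC Z by rewrite lt0r sn0 sqrtC_ge0.
have := h ((sqrtC Z / 2%:R)%R).
rewrite divr_gt0 ?ltr0n // => /(_ isT).
move=> hle.
have hh : sqrtC Z - sqrtC Z / 2%:R = sqrtC Z / 2%:R by field.
have : 0 < sqrtC Z - sqrtC Z / 2%:R by rewrite hh divr_gt0 ?ltr0n.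
by rewrite subr_gt0 => /(le_lt_trans hle); rewrite ltxx.
Qed.

Lemma approx (R : realType) (H : lmodType R[i]) (ip : H -> H -> R[i])
    (K : bij -> H -> H) (n : nat) (P : H -> H) :
  unitary_rep ip K ->
  (forall a b x, (n <= a)%N -> (n <= b)%N -> K (btr a b) (P x) = P x) ->
  forall s : bij, in_S n s -> forall j, exists t : bij,
    [/\ in_S n t, (forall i, (i < j)%N -> t i = s i) & forall x, K t (P x) = P x].
Proof.
move=> [hU hM hI] htr s hs; elim=> [|j [t [ht hts htP]]].
  by exists bid; split => // i.
have [jn|nj] := ltnP j n.
  exists t; split => // i; rewrite ltnS leq_eqVlt => /orP [/eqP ->|]; last exact: hts.
  by rewrite ht // hs.
have an : (n <= t j)%N.
  rewrite leqNgt; apply/negP => tj.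
  have := bij_inj _ _ (ht _ tj); lia.
have bn : (n <= s j)%N.
  rewrite leqNgt; apply/negP => sj.
  have := bij_inj _ _ (hs _ sj); lia.
exists (bmul (btr (t j) (s j)) t); split.
- move=> k kn /=; rewrite (ht k kn) /tr_fun.
  by case: ifP => [/eqP|_]; [lia|]; case: ifP => [/eqP|_]; [lia|].
- move=> i; rewrite ltnS leq_eqVlt => /orP [/eqP ->|ij] /=.
    by rewrite /tr_fun eqxx.
  rewrite (hts i ij) /tr_fun.
  case: ifP => [/eqP e1|_].
    rewrite -(hts i ij) in e1.
    by move: (bij_inj _ _ e1); lia.
  case: ifP => [/eqP e2|_] //.
  by move: (bij_inj _ _ e2); lia.
- by move=> x /=; rewrite hM htP htr.
Qed.

Theorem lemma3 (R : realType) (H : lmodType R[i]) (ip : H -> H -> R[i])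
    (K : bij -> H -> H) (n : nat) (P : H -> H) :
  is_hilbert ip ->
  unitary_rep ip K ->
  rep_continuous ip K ->
  weak_op_limit ip (fun m => K (sigma n m)) P ->
  forall s : bij, in_S n s -> forall x : H, K s (P x) = P x.
Proof.
move=> [hi _] hK hc hw s hs x.
have htr := @transpo_fix R H ip K n P hi hK hc hw.
have hap := @approx R H ip K n P hK htr s hs.
case: (hi) => _ _ hp hd.
case: (hK) => hU hM hI.
apply/eqP; rewrite -subr_eq0; apply/eqP; apply: hd.
apply: small_sqrt => // e e0.
have [k0 hk0] := hc (P x) e e0.
have [t [ht hts htP]] := hap (maxn k0 n).
pose tinv := @Bij (binv t) t (@binvK t) (@bfunK t).
pose w := bmul tinv s.
have hwS : in_S (maxn k0 n) w.
  by move=> i hi' /=; rewrite -hts // bfunK.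
have hz := hk0 (maxn k0 n) (leq_maxl _ _) w hwS.
have -> : K s = K (bmul t w).
  by congr K; apply: bij_eq => k /=; rewrite binvK.
rewrite hM.
have -> : K t (K w (P x)) - P x = K t (K w (P x) - P x) by rewrite (KB hK) htP.
by case: (hU t) => _ _ ->.
Qed.
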